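(* Let $\Lambda=D+A_n+A_p$ be an $n\times n$ SDD matrix, where $D$ is the diagonal of $\Lambda$, $A_p$ contains all positive off-diagonal entries of $\Lambda$ and $A_n$ contains all negative off-diagonal entries. Let $$S=\begin{pmatrix}D+A_n&-A_p\\-A_p&D+A_n\end{pmatrix},$$ and let $\tilde C$ be a matrix with $\tilde C\tilde C^\top=S^{-1}$. Then the matrix $C=\frac1{\sqrt2}\begin{pmatrix}I_n&-I_n\end{pmatrix}\tilde C$ satisfies $CC^\top=\Lambda^{-1}$.
   Context: SDD: symmetric matrix with $m_{ii}>\sum_{j\ne i}|m_{ij}|$ for all $i$. $I_n$ is the $n\times n$ identity. *)

(* Defs.v *)
From HB Require Import structures.
From mathcomp Require Import all_boot all_order all_algebra.
Set Implicit Arguments. Unset Strict Implicit. Unset Printing Implicit Defensive.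
Import Order.TTheory GRing.Theory Num.Theory.
Local Open Scope ring_scope.

Definition SDD (R : numDomainType) (n : nat) (M : 'M[R]_n) : Prop :=
  M^T = M /\ forall i : 'I_n, \sum_(j < n | j != i) `|M i j| < M i i.

Definition diag_part (R : numDomainType) (n : nat) (M : 'M[R]_n) : 'M[R]_n :=
  \matrix_(i, j) (if i == j then M i j else 0).

Definition pos_offdiag (R : numDomainType) (n : nat) (M : 'M[R]_n) : 'M[R]_n :=
  \matrix_(i, j) (if (i != j) && (0 < M i j) then M i j else 0).

Definition neg_offdiag (R : numDomainType) (n : nat) (M : 'M[R]_n) : 'M[R]_n :=
  \matrix_(i, j) (if (i != j) && (M i j < 0) then M i j else 0).

(* Main.v *)
Require Import Defs.
From HB Require Import structures.
From mathcomp Require Import all_boot all_order all_algebra.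
Import Order.TTheory GRing.Theory Num.Theory.
Local Open Scope ring_scope.

Lemma dom_unit (R : realFieldType) n (A : 'M[R]_n) :
  (forall i, \sum_(j < n | j != i) `|A i j| < A i i) -> A \in unitmx.
Proof.
move=> HA; rewrite unitmxE unitfE -det_tr; apply/negP => /det0P [v nz Hv].
have [k vk] : exists k, v 0 k != 0.
  apply/existsP; move: nz; apply: contraR => /existsPn H.
  by apply/eqP/matrixP => i j; rewrite ord1 mxE; apply/eqP/negbNE/H.
case: (@arg_maxP _ _ _ k xpredT (fun i => `|v 0 i|) isT) => m _ Hm.
have Hm' : forall i, `|v 0 i| <= `|v 0 m| by move=> i; exact: Hm.
have vm : 0 < `|v 0 m| by apply: lt_le_trans (Hm' k); rewrite normr_gt0.
have := congr1 (fun M : 'rV[R]_n => M 0 m) Hv; rewrite !mxE.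
rewrite (bigD1 m) //= mxE => /eqP; rewrite addr_eq0 => /eqP E.
have : `|v 0 m * A m m| <= `|v 0 m| * \sum_(j < n | j != m) `|A m j|.
  rewrite E normrN mulr_sumr; apply: le_trans (ler_norm_sum _ _ _) _.
  apply: ler_sum => i _; rewrite mxE normrM; apply: ler_pM => //.
rewrite normrM (ger0_norm (le_trans _ (ltW (HA m)))); last by rewrite sumr_ge0.
rewrite leNgt ltr_pM2l //; by rewrite HA.
Qed.

Lemma mulmx_unit0 (R : fieldType) m n (x : 'M[R]_(m, n)) (M : 'M[R]_n) :
  M \in unitmx -> x *m M = 0 -> x = 0.
Proof. by move=> U H; rewrite -(mulmxK U x) H mul0mx. Qed.

Lemma L1 (V : zmodType) (p q r s : V) : (p - q) + (r - s) = (p - s) + (- q + r).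
Proof. by rewrite addrA addrAC (addrAC p) -addrA. Qed.
Lemma L2 (V : zmodType) (p q r s : V) : (p + q) - (r + s) = (p - s) - (- q + r).
Proof. by rewrite !opprD opprK !addrA addrAC (addrAC p). Qed.

Theorem mainTheorem12 (R : rcfType) (n k : nat) (Lambda : 'M[R]_n)
  (Ct : 'M[R]_(n + n, k)) :
  SDD Lambda ->
  let D := diag_part Lambda in
  let Ap := pos_offdiag Lambda in
  let An := neg_offdiag Lambda in
  let S : 'M[R]_(n + n) := block_mx (D + An) (- Ap) (- Ap) (D + An) in
  Ct *m Ct^T = invmx S ->
  let C : 'M[R]_(n, k) :=
    (Num.sqrt 2)^-1 *: (row_mx (1%:M : 'M[R]_n) (- (1%:M : 'M[R]_n)) *m Ct) in
  C *m C^T = invmx Lambda.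
Proof.
move=> [Hsym Hdom] D Ap An S HCt C.
set P := D + An.
have HL : P + Ap = Lambda.
  apply/matrixP => i j; rewrite /P /D /An /Ap /diag_part /neg_offdiag /pos_offdiag !mxE.
  case: eqP => [->|/eqP ij]; first by rewrite ?eqxx /= ?addr0.
  rewrite /= add0r.
  case: (ltgtP (Lambda i j) 0) => h; by rewrite ?addr0 ?add0r.
have HM : forall i j, (P - Ap) i j = if i == j then Lambda i i else - `|Lambda i j|.
  move=> i j; rewrite /P /D /An /Ap /diag_part /neg_offdiag /pos_offdiag !mxE.
  case: eqP => [->|/eqP ij]; first by rewrite ?eqxx /= ?addr0 ?subr0.
  rewrite /= add0r.
  case: (ltgtP (Lambda i j) 0) => h; rewrite ?addr0 ?add0r ?subr0 ?sub0r; first by rewrite ltr0_norm ?opprK.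
  - by rewrite gtr0_norm.
  - by rewrite h normr0.
have UL : Lambda \in unitmx by apply: dom_unit.
have UM : P - Ap \in unitmx.
  apply: dom_unit => i; rewrite HM eqxx.
  apply: le_lt_trans (Hdom i); rewrite le_eqVlt; apply/orP; left; apply/eqP.
  by apply: eq_bigr => j ji; rewrite HM eq_sym (negbTE ji) normrN normr_id.
have US : S \in unitmx.
  rewrite unitmxE unitfE; apply/negP => /det0P [v nz Hv].
  move: Hv; rewrite -(hsubmxK v) mul_row_block.
  set a := lsubmx v; set b := rsubmx v.
  rewrite -row_mx0 => /eq_row_mx [H1 H2]; rewrite -/P in H1 H2.
  have E1 : (a + b) *m (P - Ap) = 0.
    by rewrite mulmxDl !mulmxBr L1 -!mulmxN H1 H2 addr0.
  have E2 : (a - b) *m Lambda = 0.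
    by rewrite -HL mulmxBl (mulmxDr a P) (mulmxDr b P) L2 -!mulmxN H1 H2 subr0.
  have Ea := mulmx_unit0 _ _ _ _ _ UM E1; have Eb := mulmx_unit0 _ _ _ _ _ UL E2.
  have a0 : a = 0.
    have : (a + b) + (a - b) = 0 by rewrite Ea Eb addr0.
    rewrite addrACA subrr addr0 -mulr2n -scaler_nat => /eqP.
    by rewrite scaler_eq0 pnatr_eq0 /= => /eqP.
  move: Ea; rewrite a0 add0r => b0.
  by move: nz; rewrite -(hsubmxK v) -/a -/b a0 b0 row_mx0 eqxx.
set u := row_mx (1%:M : 'M[R]_n) (- (1%:M : 'M[R]_n)).
have Hu : u *m S = Lambda *m u.
  rewrite /u /S mul_row_block mul_mx_row !mul1mx !mulNmx !mul1mx mulmxN mulmx1 opprK -HL -/P.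
  by congr row_mx; rewrite [LHS]addrC -opprD.
have Hu2 : invmx Lambda *m u = u *m invmx S.
  by rewrite -{1}(mulmxK US u) Hu !mulmxA mulVmx // mul1mx.
have Huu : u *m u^T = 2%:M.
  rewrite /u tr_row_mx mul_row_col linearN /= trmx1 !mulmx1 mulNmx mulmxN opprK. by rewrite mulmx1 -(raddfD (@scalar_mx R n)).
rewrite /C linearZ /= trmx_mul -scalemxAl -scalemxAr scalerA.
rewrite !mulmxA -(mulmxA u) HCt -Hu2 -mulmxA Huu mul_mx_scalar scalerA.
rewrite -invfM -expr2 sqr_sqrtr ?mulVf ?scale1r //.
by rewrite pnatr_eq0.
Qed.
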